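(* Let $\varepsilon \ge 0$ and $\delta \in [0,1]$, and let $\mathcal{M}\colon\{0,1\}\to\{0,1\}$ be a randomized mechanism satisfying $(\varepsilon,\delta)$-differential privacy, i.e. for all $z\in\{0,1\}$ and all $\mathrm{x}\neq \mathrm{x}'$ in $\{0,1\}$, $$\Pr[\mathcal{M}(\mathrm{x})=z]\le e^{\varepsilon}\Pr[\mathcal{M}(\mathrm{x}')=z]+\delta.$$ Consider any classifier of the following form: it is given two probability distributions $\mathcal{S}_0,\mathcal{S}_1$ on $\mathbb{R}$, and to an individual whose reported (perturbed) value is $z\in\{0,1\}$ it assigns a score drawn from $\mathcal{S}_z$. Let $z=\mathcal{M}(1)$ be the report of a positive sample (true value $1$) and $z'=\mathcal{M}(0)$ the report of a negative sample (true value $0$), with the two runs of $\mathcal{M}$ independent, and let $s\sim\mathcal{S}_z$, $s'\sim\mathcal{S}_{z'}$ be drawn independently (given $z,z'$). Define the AUC of the classifier as $$\mathrm{AUC}=\Pr[s>s']+\tfrac12\Pr[s=s'].$$ Then $$\mathrm{AUC}\le 1-\frac{1-\delta}{e^{\varepsilon}+1}.$$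
   Context: The classifier (adversary) has access only to the reported values and to the mechanism $\mathcal{M}$, not to the true values; the AUC is the probability that a randomly chosen positive sample is ranked above a randomly chosen negative sample, with ties counted as $1/2$. *)

(* Defs.v *)
From HB Require Import structures.
From mathcomp Require Import all_boot all_order all_algebra.
From mathcomp Require Import all_classical all_reals all_analysis.
Set Implicit Arguments. Unset Strict Implicit. Unset Printing Implicit Defensive.
Import Order.TTheory GRing.Theory Num.Theory.
Local Open Scope classical_set_scope.
Local Open Scope ring_scope.

(* A randomized mechanism {0,1} -> {0,1} (bits encoded as bool, true = 1) is
   given by its transition probabilities: [M x z] = Pr[M(x) = z]. *)
Definition is_mechanism (R : realType) (M : bool -> bool -> R) : Prop :=
  forall x, (forall z, 0 <= M x z) /\ M x false + M x true = 1.

Definition dp (R : realType) (eps delta : R) (M : bool -> bool -> R) : Prop :=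
  forall z x x', x != x' -> M x z <= expR eps * M x' z + delta.

Definition pair_auc (R : realType) (Sa Sb : probability (measurableTypeR R) R) : R :=
  fine ((Sa \x Sb)%E [set p | p.2 < p.1])
  + 2^-1 * fine ((Sa \x Sb)%E [set p | p.1 = p.2]).

(* AUC of the classifier: z = M(1), z' = M(0) independent, s ~ S_z, s' ~ S_z'
   independent given (z, z'); by total probability over (z, z'). *)
Definition auc (R : realType) (M : bool -> bool -> R)
    (S : bool -> probability (measurableTypeR R) R) : R :=
  \sum_(z : bool) \sum_(z' : bool) M true z * M false z' * pair_auc (S z) (S z').

(* Main.v *)
Require Import Defs.
From HB Require Import structures.
From mathcomp Require Import all_boot all_order all_algebra.
From mathcomp Require Import all_classical all_reals all_analysis.
From mathcomp Require Import ring lra.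
Import Order.TTheory GRing.Theory Num.Theory.
Local Open Scope ring_scope.
Local Open Scope classical_set_scope.
Section S.
Variable R : realType.
Implicit Types P Q : probability (measurableTypeR R) R.

Lemma prod_swap P Q (A : set (R * R)) : measurable A ->
  (P \x Q)%E A = (Q \x P)%E [set p | A (p.2, p.1)].
Proof.
move=> mA.
have := indic_fubini_tonelli P Q mA.
rewrite indic_fubini_tonelli_FE // indic_fubini_tonelli_GE // => ->.
Qed.

Lemma mlt : measurable [set p : R * R | p.2 < p.1].
Proof.
have := measurable_realfun.measurable_fun_ltr (@measurable_snd _ _ R R) (@measurable_fst _ _ R R).
move=> /(_ measurableT [set true]) /(_ I); rewrite setTI.
congr measurable; apply/seteqP; split => p //=.
Qed.
Lemma mgt : measurable [set p : R * R | p.1 < p.2].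
Proof.
have := measurable_realfun.measurable_fun_ltr (@measurable_fst _ _ R R) (@measurable_snd _ _ R R).
move=> /(_ measurableT [set true]) /(_ I); rewrite setTI.
congr measurable; apply/seteqP; split => p //=.
Qed.
Lemma meq : measurable [set p : R * R | p.1 = p.2].
Proof.
have := measurable_realfun.measurable_fun_eqr (@measurable_fst _ _ R R) (@measurable_snd _ _ R R).
move=> /(_ measurableT [set true]) /(_ I); rewrite setTI.
congr measurable; apply/seteqP; split => p /=; first by move/eqP.
by move=> h; rewrite /preimage /= h eqxx.
Qed.

Lemma pauc_sum P Q : pair_auc P Q + pair_auc Q P = 1.
Proof.
set L := [set p : R * R | p.2 < p.1].
set G := [set p : R * R | p.1 < p.2].
set E := [set p : R * R | p.1 = p.2].
have e1 : (Q \x P)%E L = (P \x Q)%E G by rewrite prod_swap //; exact: mlt.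
have e2 : (Q \x P)%E E = (P \x Q)%E E.
  rewrite prod_swap; last exact: meq.
  by congr (_ _); apply/seteqP; split => p /= h; apply/esym. 
have hU : ((P \x Q) L + (P \x Q) G + (P \x Q) E = 1)%E.
  rewrite -measureU; last 3 first.
  - exact: mlt.
  - exact: mgt.
  - by apply/seteqP; split => p //= [h1 h2]; move: (lt_trans h1 h2); rewrite ltxx.
  rewrite -measureU; last 3 first.
  - by apply: measurableU; [exact: mlt | exact: mgt].
  - exact: meq.
  - by apply/seteqP; split => p //= [[h1|h1] h2]; rewrite /L /G /E /= in h1 h2; rewrite h2 ltxx in h1.
  rewrite (_ : _ `|` _ = setT); first exact: (probability_setT (P \x Q)%E).
  apply/seteqP; split => p //= _.
  case: (ltgtP p.1 p.2) => h; [by left; right| by left; left | by right].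
have fin X : measurable X -> (P \x Q)%E X \is a fin_num.
  move=> mX; rewrite ge0_fin_numE; last exact: measure_ge0.
  apply: (le_lt_trans (probability_le1 (P \x Q)%E mX)); exact: ltey.
have fL := fin _ mlt; have fG := fin _ mgt; have fE := fin _ meq.
have := congr1 fine hU.
rewrite fineD; [|by rewrite fin_numD fL fG|exact: fE]. rewrite fineD //.
rewrite /pair_auc e1 e2 /=.
rewrite -/L -/E /=.
move=> h; lra.
Qed.

Lemma pauc_ge0 P Q : 0 <= pair_auc P Q.
Proof.
rewrite /pair_auc; apply: addr_ge0; last apply: mulr_ge0 => //.
- by apply: fine_ge0; exact: measure_ge0.
- by apply: fine_ge0; exact: measure_ge0.
Qed.
End S.

Theorem theorem1 (R : realType) (eps delta : R)
  (M : bool -> bool -> R) (S : bool -> probability (measurableTypeR R) R) :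
  0 <= eps -> 0 <= delta -> delta <= 1 ->
  is_mechanism M -> dp eps delta M ->
  auc M S <= 1 - (1 - delta) / (expR eps + 1).
Proof.
move=> he hd0 hd1 hM hdp.
have hTT : pair_auc (S true) (S true) = 2^-1.
  have := @pauc_sum R (S true) (S true); lra.
have hFF : pair_auc (S false) (S false) = 2^-1.
  have := @pauc_sum R (S false) (S false); lra.
have hFT := @pauc_sum R (S true) (S false).
have q0 := @pauc_ge0 R (S true) (S false).
have q1 := @pauc_ge0 R (S false) (S true).
have e1 : 1 <= expR eps by rewrite -expR0 ler_expR.
have d1 := hdp false true false isT.
have d3 := hdp true true false isT.
have d4 := hdp true false true isT.
have d2 := hdp false false true isT.
have [_ m1] := hM true.
have [_ m0] := hM false.
have [a0 _] := hM true.
have [b0 _] := hM false.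
have := a0 true; have := a0 false; have := b0 true; have := b0 false.
rewrite /auc !big_bool /=.
rewrite hTT hFF.
move: (pair_auc (S true) (S false)) (pair_auc (S false) (S true)) hFT q0 q1 => q r hqr q0 q1.
move: (expR eps) e1 d1 d2 d3 d4 => e e1 d1 d2 d3 d4.
have ha : M true false = 1 - M true true by lra.
have hb : M false false = 1 - M false true by lra.
rewrite ha hb in d1 d2 *.
move: (M true true) (M false true) d1 d2 d3 d4 => a b d1 d2 d3 d4 _ _ _ _.
have -> : r = 1 - q by lra.
have ep : 0 < e + 1 by lra.
have U1 : (1 - delta) / (e + 1) <= (1 - a + b) / 2.
  rewrite ler_pdivrMr //; nra.
have U0 : (1 - delta) / (e + 1) <= (1 + a - b) / 2.
  rewrite ler_pdivrMr //; nra.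
move: ((1 - delta) / (e + 1)) U0 U1 => t U0 U1.
have q2 : q <= 1 by lra.
have -> : a * b / 2 + a * (1 - b) * q + ((1 - a) * b * (1 - q) + (1 - a) * (1 - b) / 2)
  = 1 - ((1 - q) * ((1 + a - b) / 2) + q * ((1 - a + b) / 2)). by field.
nra.
Qed.
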